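(* Let $(V,\phi)$ be a unitary vertex operator superalgebra. Then $V$ is self-dual, i.e. $V$ is isomorphic, as a $V$-module, to its contragredient module $V'$.
   Context: A vertex operator superalgebra (VOSA) $(V,Y,\mathbf 1,\omega)$ is a $\mathbb Z_2$-graded space $V=V_{\bar0}\oplus V_{\bar1}$ with vertex operators $Y(v,z)=\sum v_nz^{-n-1}$, vacuum $\mathbf 1$ and conformal vector $\omega$ with $L(n)=\omega_{n+1}$ satisfying the Virasoro relations, the $L(-1)$-derivative property, a grading $V=\bigoplus_{n\in\frac12\mathbb Z}V_n$ ($V_{\bar0}$ = integer weights, $V_{\bar1}$ = half-odd weights, $L(0)|_{V_n}=n$, finite-dimensional, zero for $n\ll0$), truncation, vacuum and creation axioms, and the super Jacobi identity with sign $(-1)^{[u][v]}$. An anti-linear involution $\phi$ of $V$ is an anti-linear bijection of order 2 with $\phi(\mathbf 1)=\mathbf 1$, $\phi(\omega)=\omega$, $\phi(u_nv)=\phi(u)_n\phi(v)$. $(V,\phi)$ is unitary if there is a positive definite Hermitian form $(\,,)$ on $V$ with $(Y(e^{zL(1)}(-1)^{L(0)+2L(0)^2}z^{-2L(0)}a,z^{-1})u,v)=(u,Y(\phi(a),z)v)$ for all $a,u,v\in V$. For a $V$-module $M=\bigoplus_{\lambda\in\mathbb C}M_\lambda$ (graded by $L(0)$-eigenvalues), the contragredient module is $M'=\bigoplus_\lambda M_\lambda^*$ with $\langle Y'(a,z)w',w\rangle=\langle w',Y(e^{zL(1)}(-1)^{L(0)+2L(0)^2}z^{-2L(0)}a,z^{-1})w\rangle$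 for $a\in V$, $w\in M$, $w'\in M'$. *)

(* Defs.v *)
(* Vertex operator superalgebras over C = R[i] (R : realType),
   written in components: Y(u,z) = \sum_n u_n z^{-n-1} is encoded by the mode map
   Y : V -> int -> V -> V,  Y u n v = u_n v. *)
From HB Require Import structures.
From mathcomp Require Import all_boot all_order all_algebra.
From mathcomp Require Export complex reals.
Set Implicit Arguments. Unset Strict Implicit. Unset Printing Implicit Defensive.
Import Order.TTheory GRing.Theory Num.Theory.
Local Open Scope ring_scope.

Section VOSA.
Variable C : numClosedFieldType.
Variable V : lmodType C.
Variable Y : V -> int -> V -> V.
Variables (vac om : V).

Definition Lop (n : int) : V -> V := Y om (n + 1).

(* v is L(0)-homogeneous of weight j/2 (j : int); v = 0 allowed *)
Definition homog (j : int) (v : V) : Prop :=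
  Lop 0 v = ((j%:~R : C) / 2%:R) *: v.

(* parity of an element: b = false (even, V_0bar = integer weights) or
   b = true (odd, V_1bar = half-odd weights); v is a finite sum of
   homogeneous vectors whose weights j/2 have (odd j) = b *)
Definition parity_homog (b : bool) (v : V) : Prop :=
  exists s : seq (int * V),
    (forall p, p \in s -> homog p.1 p.2 /\ odd (absz p.1) = b) /\
    v = \sum_(p <- s) p.2.

Definition fin_dim_sub (P : V -> Prop) : Prop :=
  exists s : seq V, forall v, P v ->
    exists c : nat -> C, v = \sum_(i < size s) c i *: s`_i.

Definition binz (r : int) (i : nat) : C :=
  (\prod_(l < i) (r%:~R - (l : nat)%:R)) / (i`!)%:R.

(* Component form of the super Jacobi identity (Borcherds identity) for
   parity-homogeneous u, v; the sums over i are finite by truncation, and N is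
   any bound beyond which all terms vanish. *)
Definition super_jacobi : Prop :=
  forall (bu bv : bool) (u v w : V) (p q r : int) (N : nat),
    parity_homog bu u -> parity_homog bv v ->
    (forall i : nat, (N <= i)%N ->
       Y u (r + i%:Z) v = 0 /\ Y v (q + i%:Z) w = 0 /\ Y u (p + i%:Z) w = 0) ->
    \sum_(i < N) binz p i *: Y (Y u (r + i%:Z) v) (p + q - i%:Z) w =
    \sum_(i < N) ((-1) ^+ i * binz r i) *:
        (Y u (p + r - i%:Z) (Y v (q + i%:Z) w)
         - ((-1) ^+ absz r * (-1) ^+ (bu && bv)) *:
             Y v (q + r - i%:Z) (Y u (p + i%:Z) w)).

Definition is_VOSA : Prop :=
  (forall n a u u' v, Y (a *: u + u') n v = a *: Y u n v + Y u' n v) /\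
  (forall n a u v v', Y u n (a *: v + v') = a *: Y u n v + Y u n v') /\
  (forall u v, exists N : int, forall n, N <= n -> Y u n v = 0) /\
  (forall n v, Y vac n v = if n == -1 then v else 0) /\
  (forall u n, 0 <= n -> Y u n vac = 0) /\
  (forall u, Y u (-1) vac = u) /\
  (exists c : C, forall (m n : int) (w : V),
     Lop m (Lop n w) - Lop n (Lop m w) =
       (m - n)%:~R *: Lop (m + n) w +
       (if m + n == 0 then ((m ^+ 3 - m)%:~R / 12%:R) * c else 0) *: w) /\
  (* L(-1)-derivative property: Y(L(-1)u,z) = d/dz Y(u,z) *)
  (forall u n w, Y (Lop (-1) u) n w = - (n%:~R) *: Y u (n - 1) w) /\
  (forall v, exists s : seq (int * V),
     (forall p, p \in s -> homog p.1 p.2) /\ v = \sum_(p <- s) p.2) /\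
  (forall j, fin_dim_sub (homog j)) /\
  (exists N : int, forall j, j < N -> forall v, homog j v -> v = 0) /\
  super_jacobi.

(* coefficient of z^{-n-1} in
   <w', Y(e^{zL(1)} (-1)^{L(0)+2L(0)^2} z^{-2L(0)} a, z^{-1}) w>
   for a of weight j/2, given F b m = <w', b_m w>, and K with L(1)^K a = 0.
   Note (-1)^{h + 2h^2} = (-1)^{j(j+1)/2} for h = j/2. *)
Definition opp_coef (j : int) (a : V) (n : int) (K : nat)
    (F : V -> int -> C) : C :=
  (-1) ^+ (absz (j * (j + 1)) %/ 2) *
  \sum_(k < K) ((k`!)%:R)^-1 * F (iter k (Lop 1) a) (j - n - 2 - k%:Z).

(* linear functionals and the contragredient module V' = (+)_n V_n^* *)
Definition lin_functional (f : V -> C) : Prop :=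
  forall a u v, f (a *: u + v) = a * f u + f v.

Definition in_contragredient (f : V -> C) : Prop :=
  lin_functional f /\
  exists N : nat, forall j : int, (N <= absz j)%N -> forall v, homog j v -> f v = 0.

(* V is isomorphic to V' as a V-module: a linear bijection Phi : V -> V'
   with Phi (a_n v) = a'_n (Phi v), where Y'(a,z) = \sum a'_n z^{-n-1} is the
   contragredient vertex operator (stated for L(0)-homogeneous a). *)
Definition self_dual : Prop :=
  exists Phi : V -> (V -> C),
    (forall v, in_contragredient (Phi v)) /\
    (forall a u v w, Phi (a *: u + v) w = a * Phi u w + Phi v w) /\
    (forall u v, Phi u = Phi v -> u = v) /\
    (forall f, in_contragredient f -> exists v, Phi v = f) /\
    (forall (j : int) (a : V) (n : int) (K : nat) (v w : V),
       homog j a -> iter K (Lop 1) a = 0 ->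
       Phi (Y a n v) w = opp_coef j a n K (fun b m => Phi v (Y b m w))).

Definition anti_linear_involution (phi : V -> V) : Prop :=
  (forall a u v, phi (a *: u + v) = a^* *: phi u + phi v) /\
  (forall u, phi (phi u) = u) /\
  phi vac = vac /\ phi om = om /\
  (forall u n v, phi (Y u n v) = Y (phi u) n (phi v)).

Definition unitary (phi : V -> V) : Prop :=
  anti_linear_involution phi /\
  exists B : V -> V -> C,
    (forall a u u' v, B (a *: u + u') v = a * B u v + B u' v) /\
    (forall u v, B u v = (B v u)^*) /\
    (forall v, v != 0 -> 0 < B v v) /\
    (forall (j : int) (a : V) (n : int) (K : nat) (u v : V),
       homog j a -> iter K (Lop 1) a = 0 ->
       opp_coef j a n K (fun b m => B (Y b m u) v) = B u (Y (phi a) n v)).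

End VOSA.

(* Main.v *)
Require Import Defs.
From Stdlib Require Import FunctionalExtensionality.
From mathcomp Require Import all_boot all_order all_algebra complex reals.
Import GRing.Theory Num.Theory.
Local Open Scope ring_scope.

Inductive spn (R : realType) (V : lmodType R[i]) (s : seq V) : V -> Prop :=
| spn0 : spn R V s 0
| spnS (a : R[i]) (u w : V) : u \in s -> spn R V s w -> spn R V s (a *: u + w).
Arguments spn {R V}.
Arguments spn0 {R V s}.
Arguments spnS {R V s}.

Lemma spn_lin (R : realType) (V : lmodType R[i]) (s : seq V) (a : R[i]) x y :
  spn s x -> spn s y -> spn s (a *: x + y).
Proof.
move=> hx; elim: hx a y => [|b u w us _ IH] a y hy.
  by rewrite scaler0 add0r.
rewrite scalerDr scalerA -addrA; apply: spnS => //; exact: IH.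
Qed.

Lemma spn_mem (R : realType) (V : lmodType R[i]) (s : seq V) u :
  u \in s -> spn s u.
Proof. by move=> us; rewrite -[u]addr0 -[u in u + 0]scale1r; apply: spnS => //; apply: spn0. Qed.

Lemma spn_sub (R : realType) (V : lmodType R[i]) (s t : seq V) x :
  {subset s <= t} -> spn s x -> spn t x.
Proof.
move=> st; elim=> [|a u w us _ IH]; first exact: spn0.
by apply: spnS => //; apply: st.
Qed.

Lemma spn_sum (R : realType) (V : lmodType R[i]) (s : seq V) (c : nat -> R[i]) :
  spn s (\sum_(i < size s) c i *: s`_i).
Proof.
apply: (big_ind (spn s)); first exact: spn0.
  by move=> x y hx hy; rewrite -[x]scale1r; apply: spn_lin.
move=> i _; rewrite -[_ *: _]addr0; apply: spnS; last exact: spn0.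
exact: mem_nth.
Qed.

Lemma dbl0 (K : zmodType) (x : K) : x = x + x -> x = 0.
Proof. by move=> h; apply: (addrI x); rewrite addr0 -h. Qed.

Lemma spn_ext (R : realType) (V : lmodType R[i]) (s : seq V) (g f : V -> R[i]) :
  lin_functional f -> lin_functional g -> (forall y, y \in s -> g y = f y) ->
  forall y, spn s y -> g y = f y.
Proof.
move=> lf lg h y; elim=> [|a u w us _ IH].
  have f0 : f 0 = 0 by have := lf 1 0 0; rewrite scaler0 addr0 mul1r => /dbl0.
  have g0 : g 0 = 0 by have := lg 1 0 0; rewrite scaler0 addr0 mul1r => /dbl0.
  by rewrite f0 g0.
by rewrite lf lg IH h.
Qed.

Arguments spn_ext {R V s g f}.
Arguments spn_sub {R V s t x}.
Arguments spn_sum {R V} s c.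
Arguments spn_lin {R V s}.
Arguments spn_mem {R V s u}.
Section Riesz.
Lemma riesz (R : realType) (V : lmodType R[i]) (B : V -> V -> R[i])
  (Blin : forall a u u' v, B (a *: u + u') v = a * B u v + B u' v)
  (Bsym : forall u v, B u v = (B v u)^*)
  (Bpos : forall v, v != 0 -> 0 < B v v) :
  forall (s : seq V) (f : V -> R[i]), lin_functional f ->
  exists x, spn s x /\ forall y, spn s y -> B y x = f y.
Proof.
have B0 : forall v, B 0 v = 0.
  by move=> v; have := Blin 1 0 0 v; rewrite scaler0 addr0 mul1r => /dbl0.
have BlinR : forall a u u' v, B v (a *: u + u') = a^* * B v u + B v u'.
  by move=> a u u' v; rewrite Bsym Blin rmorphD rmorphM /= -!Bsym.
have B0r : forall v, B v 0 = 0 by move=> v; rewrite Bsym B0 conjC0.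
have BN : forall u v, B u (- v) = - B u v.
  by move=> u v; rewrite -[- v]addr0 -scaleN1r BlinR rmorphN rmorph1 mulN1r B0r addr0.
have BD : forall u v w, B u (v + w) = B u v + B u w.
  by move=> u v w; rewrite -{1}[v]scale1r BlinR rmorph1 mul1r.
have BDl : forall u v w, B (v + w) u = B v u + B w u.
  by move=> u v w; rewrite -{1}[v]scale1r Blin mul1r.
have lB : forall u, lin_functional (fun y => B y u) by move=> u a x y; apply: Blin.
elim=> [|u t IH] f lf.
  exists 0; split; first exact: spn0.
  by apply: (spn_ext lf (lB 0)).
have [x' [sx' hx']] := IH f lf.
have [p [sp hp]] := IH _ (lB u).
have Bte : forall y, spn t y -> B y (u - p) = 0.
  by move=> y sy; rewrite BD BN hp // subrr.
have sub : {subset t <= u :: t} by move=> z zt; rewrite inE zt orbT.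
case: (eqVneq (u - p) 0) => [e0|e0].
  exists x'; split; first exact: spn_sub sx'.
  apply: (spn_ext lf (lB _)).
  move=> y; rewrite inE => /orP [/eqP ->|yt]; last by apply: hx'; apply: spn_mem.
  move/eqP: e0; rewrite subr_eq0 => /eqP ->; exact: hx'.
set e := u - p in Bte e0.
have ue : u = p + e by rewrite /e addrC subrK.
clearbody e.
set c := (f e / B e e)^*.
exists (c *: e + x'); split.
  have -> : c *: e + x' = c *: u + (- c *: p + x').
    by rewrite ue scalerDr scaleNr addrACA addrN add0r.
  apply: spnS; first by rewrite inE eqxx.
  by apply: spn_lin; apply: spn_sub sub _.
apply: (spn_ext lf (lB _)).
move=> y; rewrite inE => /orP [/eqP ->|yt].
  have Bpe : B p e = 0 by apply: Bte.
  have Bex : B e x' = 0 by rewrite Bsym Bte // conjC0.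
  have Bee : B e e != 0 by apply: lt0r_neq0; exact: Bpos.
  rewrite BlinR ue !BDl Bpe Bex add0r addr0 /c conjCK hx' //.
  rewrite divfK // -[p in f (p + _)]scale1r lf mul1r addrC //.
rewrite BlinR Bte ?mulr0 ?add0r; last exact: spn_mem.
by apply: hx'; apply: spn_mem.
Qed.
End Riesz.

Theorem mainTheorem2 (R : realType) (V : lmodType R[i])
  (Y : V -> int -> V -> V) (vac om : V) (phi : V -> V) :
  is_VOSA Y vac om -> unitary Y vac om phi -> self_dual Y om.
Proof.
move=> [lin1 [lin2 [_ [_ [cre1 [cre2 [[cc vir] [_ [grad [fdim _]]]]]]]]]].
move=> [[phlin [phinv [_ [phom phY]]]] [B [Blin [Bsym [Bpos Binv]]]]].
have B0 : forall v, B 0 v = 0.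
  by move=> v; have := Blin 1 0 0 v; rewrite scaler0 addr0 mul1r => /dbl0.
have BlinR : forall a u u' v, B v (a *: u + u') = a^* * B v u + B v u'.
  by move=> a u u' v; rewrite Bsym Blin rmorphD rmorphM /= -!Bsym.
have B0r : forall v, B v 0 = 0 by move=> v; rewrite Bsym B0 conjC0.
have BN : forall u v, B u (- v) = - B u v.
  by move=> u v; rewrite -[- v]addr0 -scaleN1r BlinR rmorphN rmorph1 mulN1r B0r addr0.
have BD : forall u v w, B u (v + w) = B u v + B u w.
  by move=> u v w; rewrite -{1}[v]scale1r BlinR rmorph1 mul1r.
have BDl : forall u v w, B (v + w) u = B v u + B w u.
  by move=> u v w; rewrite -{1}[v]scale1r Blin mul1r.
have BZl : forall a u v, B (a *: u) v = a * B u v.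
  by move=> a u v; rewrite -[a *: u]addr0 Blin B0 addr0.
have BZr : forall a u v, B v (a *: u) = a^* * B v u.
  by move=> a u v; rewrite -[a *: u]addr0 BlinR B0r addr0.
have Y0l : forall n w, Y 0 n w = 0.
  by move=> n w; have := lin1 n 1 0 0 w; rewrite scaler0 addr0 scale1r => /dbl0.
have Y0r : forall u n, Y u n 0 = 0.
  by move=> u n; have := lin2 n 1 u 0 0; rewrite scaler0 addr0 scale1r => /dbl0.
have Lvac : forall n : int, -1 <= n -> Lop Y om n vac = 0.
  by move=> n hn; rewrite /Lop cre1 // -[0](addNr 1) lerD2r.
have Lm2 : Lop Y om (-2) vac = om by rewrite /Lop cre2.
have L1om : Lop Y om 1 om = 0.
  have := vir 1 (-2) vac; rewrite Lm2 !Lvac // /Lop Y0r subr0 scaler0 add0r.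
  have -> : (1 + -2 == 0 :> int) = false by [].
  by rewrite scale0r.
have L0om : Lop Y om 0 om = 2%:R *: om.
  have := vir 0 (-2) vac; rewrite Lm2 !Lvac // {2}/Lop Y0r subr0.
  have -> : (0 + -2 == 0 :> int) = false by [].
  by rewrite scale0r addr0.
have hom4 : homog Y om 4 om.
  rewrite /homog L0om; congr (_ *: _).
  rewrite (_ : (4:int)%:~R = 2%:R * 2%:R :> R[i]) ?mulfK // ?pnatr_eq0 //.
  by rewrite -natrM.
have it2 : iter 2 (Lop Y om 1) om = 0 by rewrite /= L1om /Lop Y0r.
have Ladj : forall w x, B (Lop Y om 0 w) x = B w (Lop Y om 0 x).
  move=> w x; have := Binv 4 om 1 2 w x hom4 it2.
  rewrite /opp_coef !big_ord_recl big_ord0 /= phom.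
  rewrite L1om Y0l B0 mulr0 !addr0.
  rewrite [X in (-1) ^+ X](_ : _ = 10)%N // -signr_odd /= expr0 mul1r.
  rewrite fact0 invr1 mul1r.
  by move=> h; rewrite /Lop; exact: h.
have orth : forall j k w x, homog Y om j w -> homog Y om k x -> j != k -> B w x = 0.
  move=> j k w x hw hx jk; have := Ladj w x.
  rewrite hw hx BZl BZr fmorph_div rmorph_int rmorph_nat => /eqP.
  rewrite -subr_eq0 -mulrBl mulf_eq0 => /orP [|/eqP //].
  rewrite subr_eq0 => /eqP h; exfalso; move/eqP: jk; apply.
  apply: (@intr_inj R[i]).
  have := congr1 (fun z => z * 2%:R) h; by rewrite /= !divfK // pnatr_eq0.
have horth : forall j w (P : pred (int * V)) s,
    (forall p, p \in s -> homog Y om p.1 p.2) -> homog Y om j w ->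
    (forall p, p \in s -> P p -> p.1 != j) ->
    B w (\sum_(p <- s | P p) p.2) = 0.
  move=> j w P s hs hw hne; rewrite (big_morph _ (BD w) (B0r w)).
  apply: big1_seq => p /andP [Pp ps]; apply: (orth j p.1) => //; first exact: hs.
  by rewrite eq_sym; apply: hne.
exists (fun v w => B w (phi v)); split; [|split; [|split; [|split]]].
- move=> v; split; first by move=> a u u'; apply: Blin.
  have [s [hs e]] := grad (phi v).
  exists (\max_(p <- s) absz p.1).+1 => j hj w hw.
  rewrite e; apply: (horth j) => // p ps _; apply/eqP => pj.
  have := @leq_bigmax_seq _ _ xpredT (fun p : int * V => absz p.1) p ps isT.
  by rewrite pj => h; have := leq_ltn_trans h hj; rewrite ltnn.
- by move=> a u v w; rewrite phlin BlinR conjCK.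
- move=> u v h.
  have hw : forall w, B w (phi u) = B w (phi v).
    by move=> w; exact: (congr1 (fun F => F w) h).
  have Bxx : B (phi u - phi v) (phi u - phi v) = 0 by rewrite BD BN hw subrr.
  have x0 : phi u - phi v = 0.
    case: (eqVneq (phi u - phi v) 0) => // nz.
    by have := lt0r_neq0 (Bpos _ nz); rewrite Bxx eqxx.
  by rewrite -(phinv u) -(phinv v) (subr0_eq x0).
- move=> f [lf [N hN]].
  have cover : forall M : nat, exists T : seq V, forall j v,
      (absz j < M)%N -> homog Y om j v -> spn T v.
    elim=> [|M [T hT]]; first by exists [::].
    have [s1 h1] := fdim M%:Z; have [s2 h2] := fdim (- M%:Z).
    exists (s1 ++ s2 ++ T) => j v hj hv.
    case: (ltnP (absz j) M) => hjM.
      by apply: spn_sub (hT j v hjM hv) => z zT; rewrite !mem_cat zT !orbT.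
    have aj : absz j = M by apply/eqP; rewrite eqn_leq hjM -ltnS hj.
    case: j aj hv {hj hjM} => n /= aj hv; subst M.
      have [c ->] := h1 v hv.
      by apply: spn_sub (spn_sum _ _) => z zT; rewrite !mem_cat zT.
    rewrite NegzE in hv; have [c ->] := h2 v hv.
    by apply: spn_sub (spn_sum _ _) => z zT; rewrite !mem_cat zT orbT.
  have [T hT] := cover N.
  have [x [_ hx]] := @riesz R V B Blin Bsym Bpos T f lf.
  have [s [hs xe]] := grad x.
  set xt := \sum_(p <- s | (absz p.1 < N)%N) p.2.
  exists (phi xt); apply: functional_extensionality => w; rewrite phinv.
  have key : forall j w, homog Y om j w -> B w xt = f w.
    move=> j w' hw; case: (ltnP (absz j) N) => hjN.
      rewrite -hx; last exact: hT j w' hjN hw.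
      rewrite xe (bigID (fun p : int * V => (absz p.1 < N)%N)) /= BD.
      rewrite [X in _ + X](horth j w') ?addr0 // => p _ pN.
      by apply/eqP => pj; move: pN; rewrite pj hjN.
    rewrite (hN j hjN w' hw); apply: (horth j) => // p _ pN.
    by apply/eqP => pj; move: pN; rewrite pj ltnNge hjN.
  have [sw [hsw we]] := grad w; rewrite we.
  have fD : forall a b, f (a + b) = f a + f b.
    by move=> a b; rewrite -{1}[a]scale1r lf mul1r.
  have f0 : f 0 = 0 by have := fD 0 0; rewrite addr0 => /dbl0.
  rewrite (big_morph (fun y => B y xt) (fun a b => BDl xt a b) (B0 xt)).
  rewrite (big_morph f fD f0); apply: eq_big_seq => p ps.
  exact: key (hsw p ps).
- move=> j a n K v w hj hK; rewrite phY; symmetry; exact: Binv.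
Qed.
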